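(* Let $\kappa$ be a maximal clique of the IDNC graph $\mathcal G$. Then $\alpha_i\ge\beta_i$ for every receiver $i\in\mathcal M$, where \[ \alpha_i=\sum_{k\ne i} q_i\xi_k-\sum_{k\in\mathcal T_\rho(\kappa),k\ne i}\Phi_{ik}(q_i)+\sum_{k\in\mathcal T_\sigma(\kappa),k\ne i}\Lambda_{ik}(q_i),\qquad \beta_i=-\sum_{k\in\mathcal T_\rho(\kappa),k\ne i}\Phi_{ik}(0)+\sum_{k\in\mathcal T_\sigma(\kappa),k\ne i}\Lambda_{ik}(0), \] \[ \Phi_{ik}(x)=\frac{q_k}{N}\Big(1+\frac{(\varrho_k-\psi_k+1)(\varrho_i+x)}{N-1}\Big),\quad \Lambda_{ik}(x)=\frac{q_k\psi_k(\varrho_i+x)}{N(N-1)},\quad \xi_k=\frac{\psi_k\varrho_k}{N(N-1)}, \] with the sum over $k\ne i$ ranging over $k\in\{1,\dots,M\}$.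
   Context: A sender holds a frame $\mathcal N$ of $N\ge2$ packets and serves receivers $\mathcal M=\{1,\dots,M\}$. For each receiver $i$ there are sets $\mathcal H_i\subseteq\mathcal N$ (Has set), $\mathcal L_i=\mathcal N\setminus\mathcal H_i$ (Lacks set) and $\mathcal W_i\subseteq\mathcal L_i$ (Wants set), with cardinalities $\varrho_i=|\mathcal H_i|$, $\psi_i=|\mathcal W_i|$. Receiver $i$ has packet success probability $q_i\in[0,1]$. The IDNC graph $\mathcal G$ has a primary vertex $v_{ij}$ for each $i\in\mathcal M$, $j\in\mathcal W_i$, and a secondary vertex $v_{ij}$ for each $i\in\mathcal M$, $j\in\mathcal L_i\setminus\mathcal W_i$; two distinct vertices $v_{ij},v_{kl}$ are adjacent iff (C1) $j=l$, or (C2) $j\in\mathcal H_k$ and $l\in\mathcal H_i$. For a maximal clique $\kappa$ of $\mathcal G$, $\mathcal T_\rho(\kappa)$ (resp. $\mathcal T_\sigma(\kappa)$) denotes the set of receivers having a primary (resp. secondary) vertex in $\kappa$. *)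

(* Defs.v *)
From mathcomp Require Import all_boot all_order all_algebra.
Set Implicit Arguments. Unset Strict Implicit. Unset Printing Implicit Defensive.
Import Order.TTheory GRing.Theory Num.Theory.

Section IDNC.
Variables (N M : nat).
(* Has sets H i and Wants sets W i of receivers i : 'I_M over packets 'I_N. *)
Variables (H W : 'I_M -> {set 'I_N}).

Definition Lacks (i : 'I_M) : {set 'I_N} := ~: H i.

Definition vertex := ('I_M * 'I_N)%type.

Definition idnc_vertices : {set vertex} := [set v | v.2 \in Lacks v.1].
Definition primary (v : vertex) : bool := (v.2 \in Lacks v.1) && (v.2 \in W v.1).
Definition secondary (v : vertex) : bool := (v.2 \in Lacks v.1) && (v.2 \notin W v.1).

Definition idnc_adj (v w : vertex) : bool :=
  (v != w) && ((v.2 == w.2) || ((v.2 \in H w.1) && (w.2 \in H v.1))).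

Definition is_clique (K : {set vertex}) : bool :=
  (K \subset idnc_vertices) &&
  [forall v in K, forall w in K, (v != w) ==> idnc_adj v w].

Definition is_maximal_clique (K : {set vertex}) : bool :=
  is_clique K && [forall K' : {set vertex}, (K \proper K') ==> ~~ is_clique K'].

Definition T_rho (K : {set vertex}) : {set 'I_M} :=
  [set i | [exists j : 'I_N, ((i, j) \in K) && primary (i, j)]].
Definition T_sigma (K : {set vertex}) : {set 'I_M} :=
  [set i | [exists j : 'I_N, ((i, j) \in K) && secondary (i, j)]].

Variable R : realFieldType.
Variable q : 'I_M -> R.
Local Open Scope ring_scope.

Definition rho (i : 'I_M) : R := (#|H i|)%:R.
Definition psi (i : 'I_M) : R := (#|W i|)%:R.
Definition NR : R := N%:R.
Definition N1R : R := (N.-1)%:R.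

Definition Phi (i k : 'I_M) (x : R) : R :=
  q k / NR * (1 + (rho k - psi k + 1) * (rho i + x) / N1R).
Definition Lambda (i k : 'I_M) (x : R) : R :=
  q k * psi k * (rho i + x) / (NR * N1R).
Definition xi (k : 'I_M) : R := psi k * rho k / (NR * N1R).

Definition alpha (K : {set vertex}) (i : 'I_M) : R :=
  \sum_(k < M | k != i) q i * xi k
  - \sum_(k in T_rho K | k != i) Phi i k (q i)
  + \sum_(k in T_sigma K | k != i) Lambda i k (q i).

Definition beta (K : {set vertex}) (i : 'I_M) : R :=
  - \sum_(k in T_rho K | k != i) Phi i k 0
  + \sum_(k in T_sigma K | k != i) Lambda i k 0.
End IDNC.

(* Main.v *)
Require Import Defs.
From mathcomp Require Import all_boot all_order all_algebra.
From mathcomp Require Import ring lra zify.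
Import Order.TTheory GRing.Theory Num.Theory.
Local Open Scope ring_scope.

Lemma sum_sub_le (R : realFieldType) (M : nat) (P Q : pred 'I_M) (F : 'I_M -> R) :
  (forall k, 0 <= F k) ->
  \sum_(k | P k && Q k) F k <= \sum_(k | Q k) F k.
Proof.
move=> F0; rewrite [X in _ <= X]big_mkcond [X in X <= _]big_mkcond /=.
apply: ler_sum => k _; case: (P k); case: (Q k) => //=.
Qed.

Theorem theorem3 (R : realFieldType) (N M : nat) (H W : 'I_M -> {set 'I_N})
  (q : 'I_M -> R) (K : {set ('I_M * 'I_N)%type}) :
  (2 <= N)%N ->
  (forall i, W i \subset Lacks H i) ->
  (forall i, 0 <= q i <= 1) ->
  is_maximal_clique H K ->
  forall i : 'I_M, beta H W q K i <= alpha H W q K i.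
Proof.
move=> N2 _ q01 _ i.
have NRp : 0 < NR N R by rewrite /NR ltr0n; lia.
have N1Rp : 0 < N1R N R by rewrite /N1R ltr0n; lia.
set D := NR N R * N1R N R.
have Dp : 0 < D by rewrite mulr_gt0.
pose c k := q k * (rho H R k - psi W R k + 1) / D.
pose d k := q k * psi W R k / D.
have ePhi k : Phi H W q i k (q i) = Phi H W q i k 0 + q i * c k.
  rewrite /Phi /c /D; field; rewrite ?mulf_neq0 // ?lt0r_neq0 //.
have eLam k : Lambda H W q i k (q i) = Lambda H W q i k 0 + q i * d k.
  rewrite /Lambda /d /D; field; rewrite ?mulf_neq0 // ?lt0r_neq0 //.
rewrite /alpha /beta.
have E1 : \sum_(k in T_rho H W K | k != i) Phi H W q i k (q i) =
  \sum_(k in T_rho H W K | k != i) Phi H W q i k 0 +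
  q i * \sum_(k in T_rho H W K | k != i) c k.
  by rewrite mulr_sumr -big_split; apply: eq_bigr => k _; rewrite ePhi.
have E2 : \sum_(k in T_sigma H W K | k != i) Lambda H W q i k (q i) =
  \sum_(k in T_sigma H W K | k != i) Lambda H W q i k 0 +
  q i * \sum_(k in T_sigma H W K | k != i) d k.
  by rewrite mulr_sumr -big_split; apply: eq_bigr => k _; rewrite eLam.
rewrite E1 E2 -mulr_sumr.
have q0 : 0 <= q i by case/andP: (q01 i).
have xi0 k : 0 <= xi H W R k.
  by rewrite /xi divr_ge0 ?mulr_ge0 ?ler0n // ltW.
have d0 : 0 <= \sum_(k in T_sigma H W K | k != i) d k.
  apply: sumr_ge0 => k _; rewrite /d divr_ge0 ?(ltW Dp) // mulr_ge0 ?ler0n //.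
  by case/andP: (q01 k).
have cle : \sum_(k in T_rho H W K | k != i) c k <= \sum_(k < M | k != i) xi H W R k.
  have S := sum_sub_le _ _ (fun k => k \in T_rho H W K) (fun k => k != i) _ xi0; simpl in S.
  refine (le_trans _ S).
  apply: ler_sum => k /andP [kT _].
  have ps1 : 1 <= psi W R k.
    move: kT; rewrite inE => /existsP [j /andP [_ /andP [_ jW]]].
    rewrite /psi (_ : 1 = 1%:R) // ler_nat card_gt0; apply/set0Pn; by exists j.
  have rh0 : 0 <= rho H R k by rewrite /rho ler0n.
  case/andP: (q01 k) => qk0 qk1.
  rewrite /c /xi ler_pM2r ?invr_gt0 //.
  have h1 : 0 <= (psi W R k - 1) * (rho H R k + 1) by rewrite mulr_ge0 // ?subr_ge0 //; lra.
  case: (lerP 0 (rho H R k - psi W R k + 1)) => hX.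
  - have : q k * (rho H R k - psi W R k + 1) <= rho H R k - psi W R k + 1.
      by rewrite ler_piMl.
    nra.
  - have : q k * (rho H R k - psi W R k + 1) <= 0 by rewrite mulr_ge0_le0 // ltW.
    nra.
have := ler_wpM2l q0 cle.
have := mulr_ge0 q0 d0.
lra.
Qed.
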